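(* Let $n$ be a positive integer, and let $a\in\mathcal{T}_n$ with $\operatorname{rank}(a)=r$. Then the variant $\mathcal{T}_n^a$ embeds in $\mathcal{T}_{2n-r}$ (i.e., there is an injective semigroup homomorphism $\mathcal{T}_n^a\to\mathcal{T}_{2n-r}$).
   Context: For a positive integer $m$, $\mathcal{T}_m$ is the semigroup of all functions $\{1,\ldots,m\}\to\{1,\ldots,m\}$ under composition; $\operatorname{rank}(f)=|\operatorname{im}(f)|$. For a semigroup $S$ and $a\in S$, the variant $S^a$ is the set $S$ with operation $x\star_a y=xay$. *)

(* Defs.v *)
From mathcomp Require Import all_boot.
Set Implicit Arguments. Unset Strict Implicit. Unset Printing Implicit Defensive.

Definition Tn (m : nat) := {ffun 'I_m -> 'I_m}.

(* Product in T_m: composition, written left-to-right as is customary in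
   semigroup theory: (f * g)(x) = g (f x). *)
Definition tmul (m : nat) (f g : Tn m) : Tn m := [ffun x => g (f x)].

Definition trank (m : nat) (f : Tn m) : nat := #|[set f x | x in 'I_m]|.

Definition variant_mul (m : nat) (a : Tn m) (x y : Tn m) : Tn m :=
  tmul (tmul x a) y.

(* Main.v *)
Require Import Defs.
From mathcomp Require Import all_boot zify.

Section S.
Variables (n : nat) (a : Tn n).
Let A : {set 'I_n} := [set a x | x in 'I_n].
Definition TT := ('I_n + {i : 'I_n | i \notin A})%type.
Definition FF (x : Tn n) (t : TT) : TT :=
  match t with inl j => inl (x (a j)) | inr i => inl (x (val i)) end.

Lemma cardTT : #|{: TT}| = 2 * n - trank a.
Proof.
rewrite card_sum card_sig card_ord /trank -/A.
have h := cardsC A. rewrite card_ord in h.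
have -> : #|[pred x : 'I_n | x \notin A]| = #|~: A|.
  by apply: eq_card => i; rewrite !inE.
move: h; set u := #|A|; set v := #|~: A|; move=> h; lia.
Qed.
End S.

Theorem corollary4p1 (n : nat) (a : Tn n) :
  0 < n ->
  exists phi : Tn n -> Tn (2 * n - trank a),
    injective phi /\
    forall x y : Tn n,
      phi (variant_mul a x y) = tmul (phi x) (phi y).
Proof.
move=> _.
set m := 2 * n - trank a.
have H := cardTT n a.
pose e := fun t : TT n a => cast_ord H (enum_rank t).
pose e' := fun k : 'I_m => (enum_val (cast_ord (esym H) k) : TT n a).
have ee' : cancel e e' by move=> t; rewrite /e /e' cast_ordK enum_rankK.
have e'e : cancel e' e by move=> k; rewrite /e /e' enum_valK cast_ordKV.
exists (fun x => [ffun k => e (FF n a x (e' k))]); split.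
- move=> x y /ffunP hxy; apply/ffunP => i.
  have key : forall t, FF n a x t = FF n a y t.
    move=> t; have := hxy (e t); rewrite !ffunE ee' => /(can_inj ee'); done.
  case: (boolP (i \in [set a z | z in 'I_n])) => hi.
  + case/imsetP: hi => j _ ->.
    by have := key (inl j) => /= [[]].
  + by have := key (inr (exist _ i hi)) => /= [[]].
- move=> x y; apply/ffunP => k.
  rewrite /tmul /variant_mul !ffunE ee'.
  by case: (e' k) => [j|i] /=; rewrite !ffunE.
Qed.
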